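(* In the Standing Setup below, with $c\in\sigma$ the point of the inscribed triple of $\Delta_1=[1,g]\cup\sigma\cup[1,hg]$ lying on $\sigma=[g,hg]$, there is a constant $K_2>0$, depending only on $G,A,H$ (and not on the bigon), such that: if $\zeta$ is a subsegment of $\sigma$ whose midpoint is $c$ and which is contained in the closed $\delta$-neighborhood of $\alpha$ or in the closed $\delta$-neighborhood of $\beta$, then $l(\zeta)\le K_2$.
   Context: Standing Setup. $G$ is a word-hyperbolic group with marked finite generating set $\pi:A\to G$ (a finite alphabet $A$ with $\pi(A)$ generating $G$); $X=\Gamma(G,A)$ is its Cayley graph with word metric $d_X$, $|g|_X=d_X(1,g)$; $\delta\ge10$ is an integer such that all geodesic triangles of $X$ are $\delta$-trim; $H\le G$ is a subgroup that is $E$-quasiconvex in $X$ (every geodesic with endpoints in $H$ lies in the $E$-neighborhood of $H$). $Y=\Gamma(G/H,A)$ is the relative Cayley graph: vertices the right cosets $Hg$, and for each $(Hg,a)$ an edge from $Hg$ to $Hg\pi(a)$ labeled $a$, edges of length one. A path is near geodesic if it is $p_1p'p_2$ with $p_1,p',p_2$ geodesic and $l(p_1),l(p_2)\le1$. Key Lemma (Lemma 3.3): there is an integer $K_1>0$ such that whenever $g,f$ are $|\cdot|_X$-shortest in $Hg,Hf$, $w$ labels a near geodesic path in $Y$ from $Hg$ to $Hf$ and $h\in H$ satisfies $hf=g\bar w$, then $|h|_X\le K_1$. Bigon data: $g,f\in G$ are $|\cdot|_X$-shortest elements of their cosets; $\alpha',\beta'$ are near geodesic paths in $Y$ from $Hg$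 to $Hf$ with labels $w,u$; $h_1,h_2\in H$ satisfy $h_1g\bar w=f=h_2g\bar u$ (so $|h_i|_X\le K_1$); $f'=g\bar w$ and $h=h_1^{-1}h_2$, so $f'=hg\bar u$ and $|h|_X\le 2K_1$. Fix geodesics $[1,g]$, $[1,hg]$, $\sigma=[g,hg]$, $\alpha=[g,f']$, $\beta=[hg,f']$ in $X$. Inscribed triple: for a geodesic triangle with sides $[z,x],[z,y],[x,y]$, it is the unique points $p\in[z,x]$, $q\in[z,y]$, $r\in[x,y]$ with $d(z,p)=d(z,q)=(x,y)_z$, $d(x,p)=d(x,r)=(y,z)_x$, $d(y,q)=d(y,r)=(x,z)_y$, where $(x,y)_z=\frac12[d(z,x)+d(z,y)-d(x,y)]$. $\delta$-trim: for the sides $[z,x],[z,y]$, points at equal distance $\le(x,y)_z$ from $z$ are within $\delta$ of each other, and similarly at the vertices $x$ and $y$. *)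

(* Defs.v *)
From HB Require Import structures.
From mathcomp Require Import all_boot.
From Stdlib Require Import Reals ClassicalEpsilon.
Set Implicit Arguments.
Unset Strict Implicit.
Unset Printing Implicit Defensive.

Section CayleyDefs.
Variables (G : groupType) (A : finType) (pi : A -> G).

(** Words over A^{+-1}: (a, true) stands for a, (a, false) for a^{-1}. *)
Definition letter_val (x : A * bool) : G :=
  if x.2 then pi x.1 else ((pi x.1)^-1)%g.

Definition word_val (w : seq (A * bool)) : G :=
  foldr (fun x g => (letter_val x * g)%g) 1%g w.

Definition generates : Prop := forall g : G, exists w, word_val w = g.

Definition wlen (g : G) : nat :=
  epsilon (inhabits 0%N)
    (fun n => (exists w, size w = n /\ word_val w = g) /\
              (forall w, word_val w = g -> (n <= size w)%N)).

Definition dG (x y : G) : nat := wlen (x^-1 * y)%g.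

(** Points of the Cayley graph X = Gamma(G, A) (a metric graph with unit
    edges).  [OnEdge g a t] is the point at distance t (clamped to [0,1])
    from the vertex g along the edge (g,a) joining g to g pi(a). *)
Inductive pointX : Type :=
  | Vtx : G -> pointX
  | OnEdge : G -> A -> R -> pointX.

Definition clamp01 (t : R) : R := Rmax 0 (Rmin 1 t).

Definition ends (p : pointX) : seq (G * R) :=
  match p with
  | Vtx g => [:: (g, 0%R)]
  | OnEdge g a t => [:: (g, clamp01 t); ((g * pi a)%g, (1 - clamp01 t)%R)]
  end.

Definition minR (s : seq R) : R := foldr Rmin (head 0%R s) s.

(** The path metric of X (it is a pseudometric on representatives;
    different representatives of the same point are at distance 0). *)
Definition dX (p q : pointX) : R :=
  let c := minR [seq (INR (dG e1.1 e2.1) + e1.2 + e2.2)%R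
                   | e1 <- ends p, e2 <- ends q] in
  match p, q with
  | OnEdge g a t, OnEdge g' a' t' =>
      if (g == g') && (a == a') then Rmin (Rabs (clamp01 t - clamp01 t')) c
      else c
  | _, _ => c
  end.

Definition geodesic (x y : pointX) (gam : R -> pointX) : Prop :=
  dX (gam 0%R) x = 0%R /\ dX (gam (dX x y)) y = 0%R /\
  forall s t, (0 <= s <= dX x y)%R -> (0 <= t <= dX x y)%R ->
    dX (gam s) (gam t) = Rabs (s - t).

Definition gromov (z x y : pointX) : R :=
  ((dX z x + dX z y - dX x y) / 2)%R.

Definition trim_triangle (delta : R) (x y z : pointX)
    (gzx gzy gxy : R -> pointX) : Prop :=
  (forall s, (0 <= s <= gromov z x y)%R ->
     (dX (gzx s) (gzy s) <= delta)%R) /\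
  (forall s, (0 <= s <= gromov x y z)%R ->
     (dX (gzx (dX z x - s)) (gxy s) <= delta)%R) /\
  (forall s, (0 <= s <= gromov y x z)%R ->
     (dX (gzy (dX z y - s)) (gxy (dX x y - s)) <= delta)%R).

Definition all_triangles_trim (delta : R) : Prop :=
  forall (x y z : pointX) (gzx gzy gxy : R -> pointX),
    geodesic z x gzx -> geodesic z y gzy -> geodesic x y gxy ->
    trim_triangle delta x y z gzx gzy gxy.

Definition quasiconvex (H : {pred G}) (E : R) : Prop :=
  forall h1 h2 (gam : R -> pointX), h1 \in H -> h2 \in H ->
    geodesic (Vtx h1) (Vtx h2) gam ->
    forall s, (0 <= s <= dX (Vtx h1) (Vtx h2))%R ->
      exists h, h \in H /\ (dX (gam s) (Vtx h) <= E)%R.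

Definition same_coset (H : {pred G}) (x y : G) : Prop := (x * y^-1)%g \in H.

(** The path in Y = Gamma(G/H, A) starting at Hx with label w is geodesic. *)
Definition Ygeod (H : {pred G}) (x : G) (w : seq (A * bool)) : Prop :=
  forall v, same_coset H (x * word_val v)%g (x * word_val w)%g ->
    (size w <= size v)%N.

Definition near_geodesic (H : {pred G}) (x y : G) (w : seq (A * bool)) : Prop :=
  same_coset H (x * word_val w)%g y /\
  exists w1 w' w2, w = w1 ++ w' ++ w2 /\ (size w1 <= 1)%N /\ (size w2 <= 1)%N /\
    Ygeod H x w1 /\ Ygeod H (x * word_val w1)%g w' /\
    Ygeod H (x * word_val w1 * word_val w')%g w2.

Definition shortest_in_coset (H : {pred G}) (g : G) : Prop :=
  forall h, h \in H -> (wlen g <= wlen (h * g)%g)%N.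

End CayleyDefs.

(* Main.v *)
Require Import Defs.
From HB Require Import structures.
From mathcomp Require Import all_boot.
From Stdlib Require Import Reals.
From Stdlib Require Import Lra ClassicalEpsilon Classical.
From mathcomp Require Import zify.
Set Implicit Arguments.
Unset Strict Implicit.
Unset Printing Implicit Defensive.

Lemma foldr_min_le (s : seq R) d x : List.In x s -> (foldr Rmin d s <= x)%R.
Proof.
elim: s => [|y s IH] //= [->|H]; first exact: Rmin_l.
apply: Rle_trans (Rmin_r _ _) (IH H).
Qed.
Lemma foldr_min_in (s : seq R) d : foldr Rmin d s = d \/ List.In (foldr Rmin d s) s.
Proof.
elim: s => [|y s IH] /=; first by left.
rewrite /Rmin; case: Rle_dec => _; first by right; left.
by case: IH => [->|H]; [left|right; right].
Qed.
Lemma minR_le s x : List.In x s -> (minR s <= x)%R.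
Proof. exact: foldr_min_le. Qed.
Lemma minR_in s : s <> [::] -> List.In (minR s) s.
Proof.
rewrite /minR; case: s => [//|y s] _ /=.
case: (foldr_min_in (y :: s) y) => /= [->|//]; by left.
Qed.
Lemma In_cat (T : Type) (s t : seq T) x : List.In x (s ++ t) <-> List.In x s \/ List.In x t.
Proof.
elim: s => [|y s IH] /=; first by intuition.
rewrite IH; intuition.
Qed.
Lemma In_map (T U : Type) (f : T -> U) s y : List.In y (map f s) <-> exists x, y = f x /\ List.In x s.
Proof.
elim: s => [|x s IH] /=; first by split=> // [[x []]].
rewrite IH; split.
  by case=> [<-|[z [-> H]]]; [exists x; split; [|left]|exists z; split; [|right]].
by case=> z [-> [->|H]]; [left|right; exists z].
Qed.
Lemma in_allpairs (T1 T2 T3 : Type) (f : T1 -> T2 -> T3) s t a b :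
  List.In a s -> List.In b t -> List.In (f a b) [seq f x y | x <- s, y <- t].
Proof.
elim: s => [|x s IH] //= [->|H]; rewrite In_cat; [left|right; exact: IH].
by rewrite In_map; exists b.
Qed.
Lemma allpairs_in (T1 T2 T3 : Type) (f : T1 -> T2 -> T3) s t z :
  List.In z [seq f x y | x <- s, y <- t] -> exists a b, List.In a s /\ List.In b t /\ z = f a b.
Proof.
elim: s => [|x s IH] //= /In_cat [/In_map [y [-> Hy]]|/IH [a [b [Ha [Hb ->]]]]].
  by exists x, y; split; [left|].
by exists a, b; split; [right|].
Qed.

Lemma min_exists (P : nat -> Prop) :
  (exists n, P n) -> exists n, P n /\ forall m, P m -> (n <= m)%N.
Proof.
move=> [n Pn]; elim/ltn_ind: n Pn => n IH Pn.
case: (classic (exists m, P m /\ (m < n)%N)) => [[m [Pm lt]]|no].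
  exact: IH m lt Pm.
exists n; split=> // m Pm; rewrite leqNgt; apply/negP => lt; apply: no; eauto.
Qed.

Section W.
Variables (G : groupType) (A : finType) (pi : A -> G).
Hypothesis gen : generates pi.
Local Notation wv := (word_val pi).
Local Notation wl := (wlen pi).

Definition winv (w : seq (A * bool)) : seq (A * bool) :=
  rev (map (fun x => (x.1, ~~ x.2)) w).

Lemma wv_cat u v : wv (u ++ v) = (wv u * wv v)%g.
Proof. elim: u => [|x u IH] /=; first by rewrite mul1g. by rewrite IH mulgA. Qed.

Lemma letter_inv x : letter_val pi (x.1, ~~ x.2) = ((letter_val pi x)^-1)%g.
Proof. case: x => a [] //=; by rewrite invgK. Qed.

Lemma wv_winv w : wv (winv w) = ((wv w)^-1)%g.
Proof.
elim: w => [|x w IH]; first by rewrite /= invg1.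
rewrite /winv map_cons rev_cons -cats1 wv_cat -/(winv w) IH /= mulg1 letter_inv.
by rewrite invgM.
Qed.

Lemma size_winv w : size (winv w) = size w.
Proof. by rewrite size_rev size_map. Qed.

Lemma wl_spec g : (exists w, size w = wl g /\ wv w = g) /\
                  (forall w, wv w = g -> (wl g <= size w)%N).
Proof.
rewrite /wlen. match goal with |- context[epsilon ?i ?P] => apply: (@epsilon_spec nat i P) end.
have [w Hw] := gen g.
have [n [[w' [H1 H2]] H3]] :=
  @min_exists (fun n => exists w, size w = n /\ wv w = g) (ex_intro _ (size w) (ex_intro _ w (conj erefl Hw))).
exists n; split; first by exists w'.
move=> v Hv; apply: H3; by exists v.
Qed.

Lemma wl_le w : (wl (wv w) <= size w)%N.
Proof. by apply: (proj2 (wl_spec _)). Qed.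

Lemma wl_word g : exists w, size w = wl g /\ wv w = g.
Proof. exact: (proj1 (wl_spec g)). Qed.

Lemma wl1 : wl 1%g = 0%N.
Proof. by apply/eqP; rewrite -leqn0; apply: (wl_le [::]). Qed.

Lemma wlM x y : (wl (x * y)%g <= wl x + wl y)%N.
Proof.
have [u [Su Eu]] := wl_word x; have [v [Sv Ev]] := wl_word y.
by rewrite -Su -Sv -size_cat -Eu -Ev -wv_cat wl_le.
Qed.

Lemma wlV x : wl (x^-1)%g = wl x.
Proof.
suff H : forall y, (wl (y^-1)%g <= wl y)%N.
  by apply/eqP; rewrite eqn_leq H /=; have := H (x^-1)%g; rewrite invgK.
move=> y; have [u [Su Eu]] := wl_word y.
by rewrite -Su -size_winv -Eu -wv_winv wl_le.
Qed.

Lemma wl_letter a : (wl (pi a) <= 1)%N.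
Proof. by have := wl_le [:: (a, true)]; rewrite /= mulg1. Qed.

Lemma dG_sym x y : dG pi x y = dG pi y x.
Proof. by rewrite /dG -wlV invgM invgK. Qed.

Lemma dG_tri x y z : (dG pi x z <= dG pi x y + dG pi y z)%N.
Proof. by rewrite /dG; have := wlM (x^-1 * y)%g (y^-1 * z)%g; rewrite mulgA mulgK. Qed.

Lemma dGxx x : dG pi x x = 0%N.
Proof. by rewrite /dG mulVg wl1. Qed.

Lemma dG_trans k x y : dG pi (k * x)%g (k * y)%g = dG pi x y.
Proof. by rewrite /dG invgM -mulgA mulKg. Qed.

End W.


Section X.
Variables (G : groupType) (A : finType) (pi : A -> G).
Hypothesis gen : generates pi.
Local Notation dX := (dX pi).
Local Notation ends := (@ends G A pi).

Definition term (e1 e2 : G * R) := (INR (dG pi e1.1 e2.1) + e1.2 + e2.2)%R.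

Lemma ends_nil p : ends p <> [::].
Proof. by case: p. Qed.

Lemma clamp_bd t : (0 <= clamp01 t <= 1)%R.
Proof. rewrite /clamp01 /Rmax /Rmin; repeat case: Rle_dec; lra. Qed.

Lemma clamp_id t : (0 <= t <= 1)%R -> clamp01 t = t.
Proof. rewrite /clamp01 /Rmax /Rmin; repeat case: Rle_dec; lra. Qed.

Lemma dX_C1 p q e1 e2 : List.In e1 (ends p) -> List.In e2 (ends q) ->
  (dX p q <= term e1 e2)%R.
Proof.
move=> H1 H2.
have Hc := minR_le (in_allpairs (fun e1 e2 : G * R => (INR (dG pi e1.1 e2.1) + e1.2 + e2.2)%R) H1 H2).
move: Hc; rewrite /dX /term; cbv zeta.
case: p H1 => [x|x a t] _; case: q H2 => [y|y b t'] _ // Hc.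
case: ifP => _ //; exact: Rle_trans (Rmin_r _ _) Hc.
Qed.

Lemma dX_C2 x a t t' : (dX (OnEdge x a t) (OnEdge x a t') <= Rabs (clamp01 t - clamp01 t'))%R.
Proof. rewrite /dX; cbv zeta; rewrite !eqxx /=; exact: Rmin_l. Qed.

Lemma dX_C3 p q :
  (exists e1 e2, List.In e1 (ends p) /\ List.In e2 (ends q) /\ dX p q = term e1 e2) \/
  (exists x a t t', p = OnEdge x a t /\ q = OnEdge x a t' /\
     dX p q = Rabs (clamp01 t - clamp01 t')).
Proof.
set s := [seq (INR (dG pi e1.1 e2.1) + e1.2 + e2.2)%R | e1 <- ends p, e2 <- ends q].
have : s <> [::].
  rewrite /s; case E1: (ends p) => [|e1 l1]; first by move: E1; case: (p).
  case E2: (ends q) => [|e2 l2]; first by move: E2; case: (q).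
  by [].
move=> /minR_in Hin; have [e1 [e2 [H1 [H2 He]]]] := allpairs_in Hin.
have Hd : dX p q = minR s \/
  (exists x a t t', p = OnEdge x a t /\ q = OnEdge x a t' /\
     dX p q = Rabs (clamp01 t - clamp01 t')).
  rewrite /dX /s; cbv zeta.
  case: (p) => [x|x a t]; case: (q) => [y|y b t']; try by left.
  case: ifP => [/andP [/eqP <- /eqP <-]|]; last by left.
  rewrite /Rmin; case: Rle_dec => _; last by left.
  by right; exists x, a, t, t'.
case: Hd => [Hd|]; last by right.
by left; exists e1, e2; rewrite Hd He.
Qed.

Lemma ends_off p e : List.In e (ends p) -> (0 <= e.2 <= 1)%R.
Proof.
case: p => [x|x a t] /=; first by case=> [<-|//]; simpl; lra.
move=> H; have := clamp_bd t; case: H => [<-|[<-|//]] /=; lra.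
Qed.

Lemma ends_close p e e' : List.In e (ends p) -> List.In e' (ends p) ->
  (INR (dG pi e.1 e'.1) <= e.2 + e'.2)%R.
Proof.
have H0 : forall x, INR (dG pi x x) = 0%R by move=> x; rewrite (dGxx gen); reflexivity.
case: p => [x|x a t] /=.
  by case=> [<-|//]; case=> [<-|//]; rewrite /= H0; lra.
have Hc := clamp_bd t.
have H1 : (INR (dG pi x (x * pi a)%g) <= 1)%R.
  by rewrite /dG mulKg; apply: (le_INR _ 1); apply/leP; apply: (wl_letter gen).
case=> [<-|[<-|//]]; case=> [<-|[<-|//]]; rewrite /= ?H0; try lra.
rewrite (dG_sym gen); lra.
Qed.

Lemma dX_nonneg p q : (0 <= dX p q)%R.
Proof.
case: (dX_C3 p q) => [[e1 [e2 [H1 [H2 ->]]]]|[x [a [t [t' [_ [_ ->]]]]]]].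
  have := ends_off H1; have := ends_off H2; have := pos_INR (dG pi e1.1 e2.1).
  rewrite /term; lra.
exact: Rabs_pos.
Qed.

Lemma dX_sym_le p q : (dX p q <= dX q p)%R.
Proof.
case: (dX_C3 q p) => [[e1 [e2 [H1 [H2 ->]]]]|[x [a [t [t' [-> [-> ->]]]]]]].
  apply: Rle_trans (dX_C1 H2 H1) _; rewrite /term (dG_sym gen); lra.
rewrite Rabs_minus_sym; exact: dX_C2.
Qed.

Lemma dX_sym p q : dX p q = dX q p.
Proof. apply: Rle_antisym; exact: dX_sym_le. Qed.

Lemma dX_vtx x y : dX (@Vtx G A x) (@Vtx G A y) = INR (dG pi x y).
Proof. rewrite /dX /= /minR /=; unfold Rmin; destruct (Rle_dec _ _); lra. Qed.

Lemma dX_refl p : dX p p = 0%R.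
Proof.
apply: Rle_antisym; last exact: dX_nonneg.
case: p => [x|x a t]; first by rewrite dX_vtx (dGxx gen); simpl; lra.
apply: Rle_trans (dX_C2 _ _ _ _) _; rewrite Rminus_diag Rabs_R0; lra.
Qed.

Lemma same_edge_end x a t t' e' : List.In e' (ends (OnEdge x a t')) ->
  exists e, List.In e (ends (OnEdge x a t)) /\ e.1 = e'.1 /\
            (e.2 <= e'.2 + Rabs (clamp01 t - clamp01 t'))%R.
Proof.
case=> [<-|[<-|//]].
  exists (x, clamp01 t); split; [by left|split=> //=]; split_Rabs; lra.
exists ((x * pi a)%g, (1 - clamp01 t)%R); split; [by right; left|split=> //=]; split_Rabs; lra.
Qed.

Lemma Rabs_tri3 a b c : (Rabs (a - c) <= Rabs (a - b) + Rabs (b - c))%R.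
Proof.
have := Rabs_triang (a - b) (b - c).
have -> : (a - b + (b - c) = a - c)%R by ring.
done.
Qed.

Lemma dX_tri p q r : (dX p r <= dX p q + dX q r)%R.
Proof.
case: (dX_C3 p q) => [[e1 [e2 [H1 [H2 E1]]]]|[x [a [t [t' [Ep [Eq E1]]]]]]];
case: (dX_C3 q r) => [[e2' [e3 [H2' [H3 E2]]]]|[y [b [u [u' [Eq' [Er E2]]]]]]].
- apply: Rle_trans (dX_C1 H1 H3) _; rewrite E1 E2 /term.
  have := ends_close H2 H2'.
  have := dG_tri gen e1.1 e2.1 e2'.1; have := dG_tri gen e1.1 e2'.1 e3.1.
  move=> /leP/le_INR; rewrite plus_INR => T1 /leP/le_INR; rewrite plus_INR => T2.
  lra.
- subst.
  have [e [He [Ee Hle]]] := same_edge_end u' H2.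
  apply: Rle_trans (dX_C1 H1 He) _; rewrite E1 E2 /term Ee.
  rewrite Rabs_minus_sym in Hle; lra.
- subst.
  have [e [He [Ee Hle]]] := same_edge_end t H2'.
  apply: Rle_trans (dX_C1 He H3) _; rewrite E1 E2 /term Ee.
  lra.
- subst p r; rewrite Eq in Eq' E2; case: Eq' => ? ? ?; subst.
  apply: Rle_trans (dX_C2 _ _ _ _) _; rewrite E1 E2; apply: Rabs_tri3.
Qed.

End X.


Section Geo.
Variables (G : groupType) (A : finType) (pi : A -> G).
Hypothesis gen : generates pi.
Local Notation dX := (dX pi).
Local Notation ends := (@ends G A pi).
Local Notation wv := (word_val pi).
Local Notation wl := (wlen pi).

Lemma wv_rcons s l : wv (rcons s l) = (wv s * letter_val pi l)%g.
Proof. by rewrite -cats1 wv_cat /= mulg1. Qed.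

Lemma geo_mid w i j : wl (wv w) = size w -> (i <= j <= size w)%N ->
  wl ((wv (take i w))^-1 * wv (take j w))%g = (j - i)%N.
Proof.
move=> geo /andP [ij jn].
set mid := take (j - i) (drop i w).
have Ej : take j w = take i w ++ mid by rewrite /mid -takeD subnKC.
have Sm : size mid = (j - i)%N.
  rewrite /mid size_takel // size_drop; lia.
rewrite Ej wv_cat mulKg.
apply/eqP; rewrite eqn_leq -{1}Sm (wl_le gen) /=.
have Ew : w = take i w ++ mid ++ drop j w by rewrite catA -Ej cat_take_drop.
have := geo; rewrite {1}Ew !wv_cat => geo'.
have H1 := wlM gen (wv (take i w)) (wv mid * wv (drop j w))%g.
have H2 := wlM gen (wv mid) (wv (drop j w)).
have H3 := wl_le gen (take i w); have H4 := wl_le gen (drop j w).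
rewrite size_drop in H4; rewrite size_takel in H3; last by lia.
rewrite geo' in H1. 
have : (size w <= i + (wl (wv mid) + (size w - j)))%N.
  apply: (leq_trans H1); rewrite leq_add //; apply: (leq_trans H2); rewrite leq_add //.
move: ij jn; clear; lia.
Qed.

Definition edgept (y : G) (l : A * bool) (c : R) : pointX G A :=
  if l.2 then OnEdge y l.1 c else OnEdge (y * (pi l.1)^-1)%g l.1 (1 - c).

Fixpoint gpath (w : seq (A * bool)) (x : G) (s : R) : pointX G A :=
  match w with
  | [::] => @Vtx G A x
  | l :: w' => if Rle_dec s 1 then edgept x l s else gpath w' (x * letter_val pi l)%g (s - 1)
  end.

Lemma ends_edgept y l c : (0 <= c <= 1)%R -> forall e, List.In e (ends (edgept y l c)) ->
  e = (y, c) \/ e = ((y * letter_val pi l)%g, (1 - c)%R).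
Proof.
move=> Hc e; case: l => a [] /=; rewrite /edgept /= clamp_id //; try lra.
  by case=> [<-|[<-|//]]; [left|right].
rewrite mulgVK; case=> [<-|[<-|//]]; [right|left]; congr pair; lra.
Qed.

Lemma edgept_in1 y l c : (0 <= c <= 1)%R -> List.In (y, c) (ends (edgept y l c)).
Proof.
move=> Hc; case: l => a [] /=; rewrite /edgept /= clamp_id //; try lra.
  by left.
rewrite mulgVK; right; left; congr pair; lra.
Qed.

Lemma edgept_in2 y l c : (0 <= c <= 1)%R ->
  List.In ((y * letter_val pi l)%g, (1 - c)%R) (ends (edgept y l c)).
Proof.
move=> Hc; case: l => a [] /=; rewrite /edgept /= clamp_id //; try lra.
  by right; left.
by left.
Qed.

Lemma gpath_seg l0 w x s : w <> [::] -> (0 <= s <= INR (size w))%R ->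
  exists i, (i < size w)%N /\ (INR i <= s <= INR i + 1)%R /\
    gpath w x s = edgept (x * wv (take i w))%g (nth l0 w i) (s - INR i).
Proof.
elim: w x s => [//|l w IH] x s _ Hs /=.
case: Rle_dec => H1.
  exists 0%N; split=> //; split; first by simpl; lra.
  by rewrite /= mulg1 Rminus_0_r.
have H1' := Rnot_le_lt _ _ H1.
have Hw : w <> [::] by move=> E; move: Hs; rewrite E /=; lra.
have Hs' : (0 <= s - 1 <= INR (size w))%R by move: Hs; change (size (l :: w)) with (size w).+1; rewrite S_INR; lra.
have [i [Hi [Hsi E]]] := IH (x * letter_val pi l)%g (s - 1)%R Hw Hs'.
exists i.+1; split; first exact: Hi. split; first by rewrite S_INR; lra.
rewrite E S_INR /= mulgA; congr edgept; ring.
Qed.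

Lemma Ynext l0 w x i : (i < size w)%N ->
  (x * wv (take i.+1 w))%g = (x * wv (take i w) * letter_val pi (nth l0 w i))%g.
Proof. by move=> Hi; rewrite (take_nth l0 Hi) wv_rcons mulgA. Qed.

Lemma Ydist w x i j : wl (wv w) = size w -> (i <= size w)%N -> (j <= size w)%N ->
  INR (dG pi (x * wv (take i w))%g (x * wv (take j w))%g) = Rabs (INR i - INR j).
Proof.
move=> geo Hi Hj; rewrite dG_trans.
case: (leqP i j) => ij.
  rewrite /dG geo_mid //; last by rewrite ij.
  rewrite minus_INR; last by apply/leP.
  rewrite Rabs_minus_sym Rabs_right //; move/leP: ij => /le_INR ij; lra.
rewrite (dG_sym gen) /dG geo_mid //; last by rewrite ltnW.
rewrite minus_INR; last by apply/leP; rewrite ltnW.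
rewrite Rabs_right //; move/ltnW/leP: ij => /le_INR ij; lra.
Qed.

Lemma Yinj w x i j : wl (wv w) = size w -> (i <= size w)%N -> (j <= size w)%N ->
  (x * wv (take i w))%g = (x * wv (take j w))%g -> i = j.
Proof.
move=> geo Hi Hj E; have := Ydist x geo Hi Hj; rewrite E (dGxx gen) /=.
move=> H; apply: INR_eq; move: H; split_Rabs; lra.
Qed.

End Geo.


Section Iso.
Variables (G : groupType) (A : finType) (pi : A -> G).
Hypothesis gen : generates pi.
Local Notation dX := (dX pi).
Local Notation ends := (@ends G A pi).
Local Notation wv := (word_val pi).
Local Notation wl := (wlen pi).
Variables (w : seq (A * bool)) (x : G) (l0 : A * bool).
Hypothesis geo : wl (wv w) = size w.
Hypothesis wn : w <> [::].
Local Notation Y i := (x * wv (take i w))%g.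
Local Notation gp := (gpath pi w x).

Lemma INR_lt_nat i j : (INR i < INR j + 1)%R -> (i <= j)%N.
Proof. rewrite -S_INR => /INR_lt /ltP; by []. Qed.

Lemma gp_ends s : (0 <= s <= INR (size w))%R -> exists i, (i < size w)%N /\
  (INR i <= s <= INR i + 1)%R /\
  (forall e, List.In e (ends (gp s)) -> exists a, (a = i \/ a = i.+1) /\ e = (Y a, Rabs (s - INR a))) /\
  List.In (Y i, (s - INR i)%R) (ends (gp s)) /\
  List.In (Y i.+1, (INR i + 1 - s)%R) (ends (gp s)) /\
  gp s = edgept pi (Y i) (nth l0 w i) (s - INR i).
Proof.
move=> Hs; have [i [Hi [Hsi E]]] := gpath_seg pi l0 x wn Hs.
have Hc : (0 <= s - INR i <= 1)%R by lra.
exists i; split=> //; split=> //; split; last split; last split; last exact: E.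
- move=> e; rewrite E => /(ends_edgept Hc) [->|->].
    by exists i; split; [left|congr pair; rewrite Rabs_right; lra].
  exists i.+1; split; first by right. rewrite -(Ynext pi l0 x Hi); congr pair.
  rewrite S_INR Rabs_left1; lra.
- by rewrite E; apply: edgept_in1.
- rewrite E (Ynext pi l0 x Hi).
  have -> : (INR i + 1 - s = 1 - (s - INR i))%R by ring.
  exact: edgept_in2.
Qed.

Lemma gp_lower s t : (0 <= s <= INR (size w))%R -> (0 <= t <= INR (size w))%R ->
  (Rabs (s - t) <= dX (gp s) (gp t))%R.
Proof.
move=> Hs Ht.
have [i [Hi [Hsi [Es [_ [_ Gs]]]]]] := gp_ends Hs.
have [j [Hj [Htj [Et [_ [_ Gt]]]]]] := gp_ends Ht.
case: (dX_C3 pi (gp s) (gp t)) => [[e1 [e2 [H1 [H2 ->]]]]|[z [c [u [u' [Ez [Ez' ->]]]]]]].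
  have [a [Ha ->]] := Es _ H1; have [b [Hb ->]] := Et _ H2.
  have Ia : (a <= size w)%N by case: Ha => ->; lia.
  have Ib : (b <= size w)%N by case: Hb => ->; lia.
  rewrite /term /= (Ydist gen x geo Ia Ib).
  split_Rabs; lra.
rewrite Gs in Ez; rewrite Gt in Ez'.
have Nx := Ynext pi l0 x Hi; have Ny := Ynext pi l0 x Hj.
have Ii : (i <= size w)%N by lia.
have Ij : (j <= size w)%N by lia.
have Ii1 : (i.+1 <= size w)%N by lia.
have Ij1 : (j.+1 <= size w)%N by lia.
move: Nx Ny Ez Ez'; rewrite /edgept.
case: (nth l0 w i) => ai []; case: (nth l0 w j) => aj [] /= Nx Ny [E1 E2 E3] [E1' E2' E3'].
- have ij : i = j by apply: (Yinj (x:=x) gen geo Ii Ij); rewrite E1 E1'.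
  subst; rewrite !clamp_id; try lra.
  have -> : (s - INR j - (t - INR j) = s - t)%R by ring. lra.
- exfalso.
  have ij : i = j.+1.
    by apply: (Yinj (x:=x) gen geo Ii Ij1); rewrite Ny /= E1 -E1'.
  have ji : i.+1 = j.
    by apply: (Yinj (x:=x) gen geo Ii1 Ij); rewrite Nx /= E1 -E1' E2 -E2' mulgVK.
  lia.
- exfalso.
  have ij : j = i.+1.
    by apply: (Yinj (x:=x) gen geo Ij Ii1); rewrite Nx /= E1' -E1.
  have ji : j.+1 = i.
    by apply: (Yinj (x:=x) gen geo Ij1 Ii); rewrite Ny /= E1' -E1 E2' -E2 mulgVK.
  lia.
- have ij : i.+1 = j.+1.
    by apply: (Yinj (x:=x) gen geo Ii1 Ij1); rewrite Nx Ny /= E1 -E1'.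
  case: ij => ij; subst; rewrite !clamp_id; try lra.
  have -> : (1 - (s - INR j) - (1 - (t - INR j)) = t - s)%R by ring.
  rewrite Rabs_minus_sym; lra.
Qed.

Lemma gp_upper_le s t : (0 <= s)%R -> (s <= t)%R -> (t <= INR (size w))%R ->
  (dX (gp s) (gp t) <= t - s)%R.
Proof.
move=> H0 Hst Htn.
case: (Req_dec s t) => [<-|Hne]; first by rewrite (dX_refl gen); lra.
have Hs : (0 <= s <= INR (size w))%R by lra.
have Ht : (0 <= t <= INR (size w))%R by lra.
have [i [Hi [Hsi [_ [_ [Ins Gs]]]]]] := gp_ends Hs.
have [j [Hj [Htj [_ [Int [_ Gt]]]]]] := gp_ends Ht.
have ij : (i <= j)%N by apply: INR_lt_nat; lra.
have [ltij|eqij] : (i < j)%N \/ i = j by lia.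
2: subst j; rewrite Gs Gt /edgept; case: (nth l0 w i) => a [] /=;
  apply: Rle_trans (dX_C2 pi _ _ _ _) _; rewrite !clamp_id; try lra; split_Rabs; lra.
apply: Rle_trans (dX_C1 Ins Int) _.
have Ii : (i.+1 <= size w)%N by [].
have Ij : (j <= size w)%N by lia.
rewrite /term /= (Ydist gen x geo Ii Ij) S_INR.
have : (INR i.+1 <= INR j)%R by apply: le_INR; apply/leP.
rewrite S_INR => H; split_Rabs; lra.
Qed.

Lemma gp_upper s t : (0 <= s <= INR (size w))%R -> (0 <= t <= INR (size w))%R ->
  (dX (gp s) (gp t) <= Rabs (s - t))%R.
Proof.
move=> Hs Ht; case: (Rle_dec s t) => H.
  rewrite Rabs_minus_sym Rabs_right; last lra; apply: gp_upper_le; lra.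
rewrite (dX_sym gen) Rabs_right; last lra; apply: gp_upper_le; lra.
Qed.

Lemma gp_geodesic : geodesic pi (@Vtx G A x) (@Vtx G A (x * wv w)%g) gp.
Proof.
have D : dX (@Vtx G A x) (@Vtx G A (x * wv w)%g) = INR (size w).
  by rewrite dX_vtx /dG mulKg geo.
have Sp : (0 < size w)%N by case: (w) wn.
have Sn : (1 <= INR (size w))%R by apply: (le_INR 1); apply/leP.
rewrite /geodesic D; split; last split.
- apply: Rle_antisym; last exact: dX_nonneg.
  have Hs : (0 <= 0 <= INR (size w))%R by lra.
  have [i [Hi [Hsi [_ [Ins _]]]]] := gp_ends Hs.
  have i0 : i = 0%N.
    have : (INR i <= INR 0)%R by simpl; lra.
    by move/INR_le/leP; rewrite leqn0 => /eqP.
  subst i.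
  have Hx : List.In (x, 0%R) (ends (@Vtx G A x)) by left.
  apply: Rle_trans (dX_C1 Ins Hx) _.
  rewrite /term /= take0 /= mulg1 (dGxx gen) /=; lra.
- apply: Rle_antisym; last exact: dX_nonneg.
  have Hs : (0 <= INR (size w) <= INR (size w))%R by lra.
  have [i [Hi [Hsi [_ [_ [Ins _]]]]]] := gp_ends Hs.
  have Ei : i.+1 = size w.
    have : (size w <= i.+1)%N by apply/leP; apply: INR_le; rewrite S_INR; lra.
    lia.
  have Hx : List.In ((x * wv w)%g, 0%R) (ends (@Vtx G A (x * wv w)%g)) by left.
  apply: Rle_trans (dX_C1 Ins Hx) _.
  rewrite /term /= Ei take_size (dGxx gen) -Ei S_INR /=; lra.
- move=> s t Hs Ht; apply: Rle_antisym; [exact: gp_upper|exact: gp_lower].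
Qed.
End Iso.

Lemma geodesic_exists (G : groupType) (A : finType) (pi : A -> G) :
  generates pi -> forall x y : G, exists gam, geodesic pi (@Vtx G A x) (@Vtx G A y) gam.
Proof.
move=> gen x y.
have [w [Sw Ew]] := wl_word gen (x^-1 * y)%g.
have Ey : y = (x * word_val pi w)%g by rewrite Ew mulVKg.
case: w Sw Ew Ey => [|l w'] Sw Ew Ey.
  rewrite Ey /= mulg1; exists (fun _ => @Vtx G A x).
  have Z := dX_refl gen (@Vtx G A x). rewrite /geodesic; cbv beta; rewrite Z; split=> //; split=> //.
  move=> s t Hs Ht; have -> : s = 0%R by lra. have -> : t = 0%R by lra.
  by rewrite Rminus_0_r Rabs_R0.
exists (gpath pi (l :: w') x); rewrite Ey.
apply: (@gp_geodesic G A pi gen (l :: w') x l) => //.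
by rewrite Ew.
Qed.


Section Main.
Variables (G : groupType) (A : finType) (pi : A -> G).
Hypothesis gen : generates pi.
Local Notation dX := (dX pi).
Local Notation wv := (word_val pi).
Local Notation wl := (wlen pi).
Local Notation V := (@Vtx G A).

Lemma near_geo_bound (H : {pred G}) x y w h' : group_closed H ->
  near_geodesic pi H x y w -> h' \in H ->
  (size w <= wl ((h' * x)^-1 * (x * wv w)) + 4)%N.
Proof.
move=> HG [_ [w1 [w' [w2 [Ew [S1 [S2 [_ [Yg _]]]]]]]]] Hh.
have [v [Sv Evv]] := wl_word gen ((h' * x)^-1 * (x * wv w))%g.
set v' := winv w1 ++ v ++ winv w2.
have : (size w' <= size v')%N.
  apply: Yg; rewrite /same_coset /v' !wv_cat !wv_winv Evv Ew !wv_cat.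
  have -> : (x * wv w1 * ((wv w1)^-1 * (((h' * x)^-1 * (x * (wv w1 * (wv w' * wv w2)))) * (wv w2)^-1)) *
    (x * wv w1 * wv w')^-1 = h'^-1)%g.
    rewrite !invgM !mulgA; do 10 rewrite ?mulgK ?mulgV ?mul1g. done.
  exact: (group_closedV HG).
rewrite /v' !size_cat !size_winv Sv => Hle. have : size w = (size w1 + (size w' + size w2))%N by rewrite Ew !size_cat. lia.
Qed.

Lemma geo_dist p q gam s : geodesic pi p q gam -> (0 <= s <= dX p q)%R ->
  dX (gam s) p = s /\ dX (gam s) q = (dX p q - s)%R.
Proof.
move=> [H0 [H1 H2]] Hs.
have D0 : (0 <= dX p q)%R by exact: dX_nonneg.
have E0 := H2 s 0%R Hs ltac:(lra).
have E1 := H2 s (dX p q) Hs ltac:(lra).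
rewrite Rminus_0_r Rabs_right in E0; last lra.
rewrite Rabs_left1 in E1; last lra.
have T1 := dX_tri gen (gam s) (gam 0%R) p.
have T2 := dX_tri gen (gam s) p (gam 0%R).
have T3 := dX_tri gen (gam s) (gam (dX p q)) q.
have T4 := dX_tri gen (gam s) q (gam (dX p q)).
rewrite (dX_sym gen p) in T2; rewrite (dX_sym gen q) in T4.
split; lra.
Qed.

Lemma dXV x y : dX (V x) (V y) = INR (wl (x^-1 * y)).
Proof. by rewrite dX_vtx. Qed.


Lemma lemma33 (H : {pred G}) (D E : R) g f w h1 :
  group_closed H -> (0 <= D)%R -> all_triangles_trim pi D -> quasiconvex pi H E ->
  shortest_in_coset pi H g -> shortest_in_coset pi H f ->
  near_geodesic pi H g f w -> h1 \in H -> (h1 * g * wv w)%g = f ->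
  (INR (wl h1) <= 4 * Rabs E + 6 * D + 4)%R.
Proof.
move=> HG D0 trim qc shg shf ng Hh1 Ef.
have HV := group_closedV HG; have HM := group_closedM HG.
have H1 : (1%g \in H) by case: HG.
set k := (h1^-1)%g.
have Hk : k \in H by apply: HV.
set y := (g * wv w)%g.
have Ey : y = (k * f)%g by rewrite -Ef /k /y -!mulgA mulKg.
have En : wl h1 = wl k by rewrite /k (wlV gen).
rewrite En.
have d1k : dX (V 1%g) (V k) = INR (wl k) by rewrite dXV invg1 mul1g.
have d1g : dX (V 1%g) (V g) = INR (wl g) by rewrite dXV invg1 mul1g.
have dky : dX (V k) (V y) = INR (wl f) by rewrite dXV Ey mulKg.
have HL : (dX (V g) (V y) <= INR (wl g) + INR (wl f) + 4)%R.
  rewrite dXV /y mulKg.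
  have B1 := wl_le gen w.
  have B2 := near_geo_bound HG ng Hk.
  have Eq : ((k * g)^-1 * (g * wv w) = g^-1 * f)%g by rewrite -/y Ey invgM -mulgA mulKg.
  rewrite Eq in B2.
  have B3 := wlM gen (g^-1)%g f; rewrite (wlV gen) in B3.
  have : (wl (wv w) <= wl g + wl f + 4)%N := leq_trans B1 (leq_trans B2 (leq_add B3 (leqnn 4))).
  move/leP/le_INR; rewrite !plus_INR; simpl; lra.
have S1 := dX_sym gen (V k) (V 1%g).
have S2 := dX_sym gen (V k) (V g).
have S3 := dX_sym gen (V y) (V 1%g).
have S4 := dX_sym gen (V y) (V g).
have S5 := dX_sym gen (V y) (V k).
have S6 := dX_sym gen (V g) (V 1%g).
have T1 := dX_tri gen (V k) (V 1%g) (V g).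
have T2 := dX_tri gen (V 1%g) (V k) (V g).
have T3 := dX_tri gen (V 1%g) (V g) (V k).
have T4 := dX_tri gen (V 1%g) (V k) (V y).
have T5 := dX_tri gen (V k) (V 1%g) (V y).
have T6 := dX_tri gen (V g) (V 1%g) (V y).
have T7 := dX_tri gen (V 1%g) (V g) (V y).
have T10 := dX_tri gen (V k) (V y) (V 1%g).
have [g1k G1k] := geodesic_exists (A:=A) gen 1%g k.
have [g1g G1g] := geodesic_exists (A:=A) gen 1%g g.
have [gkg Gkg] := geodesic_exists (A:=A) gen k g.
have [gk1 Gk1] := geodesic_exists (A:=A) gen k 1%g.
have [gky Gky] := geodesic_exists (A:=A) gen k y.
have [g1y G1y] := geodesic_exists (A:=A) gen 1%g y.
have [ggy Ggy] := geodesic_exists (A:=A) gen g y.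
have HP : (gromov pi (V 1%g) (V k) (V g) <= E + D)%R.
  have [tr _] := trim _ _ _ _ _ _ G1k G1g Gkg.
  rewrite /gromov in tr *.
  set P := ((dX (V 1%g) (V k) + dX (V 1%g) (V g) - dX (V k) (V g)) / 2)%R in tr *.
  have HP0 : (0 <= P <= dX (V 1%g) (V k))%R by rewrite /P; lra.
  have HP1 : (0 <= P <= dX (V 1%g) (V g))%R by rewrite /P; lra.
  have [h' [Hh' Eh']] := qc _ _ _ H1 Hk G1k P HP0.
  have [_ Dg] := geo_dist G1g HP1.
  have Tr := tr P ltac:(lra).
  have T8 := dX_tri gen (V h') (g1k P) (V g).
  have T9 := dX_tri gen (g1k P) (g1g P) (V g).
  rewrite (dX_sym gen (V h') (g1k P)) in T8.
  have Sh : (INR (wl g) <= dX (V h') (V g))%R.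
    rewrite dXV; apply: le_INR; apply/leP; apply: shg; exact: HV.
  lra.
have HQ : (gromov pi (V k) (V 1%g) (V y) <= E + D)%R.
  have [tr _] := trim _ _ _ _ _ _ Gk1 Gky G1y.
  rewrite /gromov in tr *.
  set Q := ((dX (V k) (V 1%g) + dX (V k) (V y) - dX (V 1%g) (V y)) / 2)%R in tr *.
  have HQ0 : (0 <= Q <= dX (V k) (V 1%g))%R by rewrite /Q; lra.
  have HQ1 : (0 <= Q <= dX (V k) (V y))%R by rewrite /Q; lra.
  have [h' [Hh' Eh']] := qc _ _ _ Hk H1 Gk1 Q HQ0.
  have [_ Dy] := geo_dist Gky HQ1.
  have Tr := tr Q ltac:(lra).
  have T8 := dX_tri gen (V h') (gk1 Q) (V y).
  have T9 := dX_tri gen (gk1 Q) (gky Q) (V y).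
  rewrite (dX_sym gen (V h') (gk1 Q)) in T8.
  have Sh : (INR (wl f) <= dX (V h') (V y))%R.
    rewrite dXV Ey mulgA; apply: le_INR; apply/leP; apply: shf.
    by apply: HM => //; apply: HV.
  lra.
have [tr0 _] := trim _ _ _ _ _ _ G1g G1y Ggy.
have [tr1 _] := trim _ _ _ _ _ _ G1k G1y Gky.
rewrite /gromov in tr0 tr1 HP HQ.
set t0 := ((dX (V 1%g) (V g) + dX (V 1%g) (V y) - dX (V g) (V y)) / 2)%R in tr0.
set t1 := ((dX (V 1%g) (V k) + dX (V 1%g) (V y) - dX (V k) (V y)) / 2)%R in tr1.
set t := Rmin t0 t1.
have Ht0 : (0 <= t <= t0)%R by rewrite /t /t0 /t1 /Rmin; case: Rle_dec; lra.
have Ht1 : (0 <= t <= t1)%R by rewrite /t /t0 /t1 /Rmin; case: Rle_dec; lra.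
have Hta : (0 <= t <= dX (V 1%g) (V g))%R by move: Ht0; rewrite /t0; lra.
have Htn : (0 <= t <= dX (V 1%g) (V k))%R by move: Ht1; rewrite /t1; lra.
have [_ Dg] := geo_dist G1g Hta.
have [_ Dk] := geo_dist G1k Htn.
have A0 := tr0 t Ht0.
have A1 := tr1 t Ht1.
have U1 := dX_tri gen (V g) (g1g t) (V k).
have U2 := dX_tri gen (g1g t) (g1y t) (V k).
have U3 := dX_tri gen (g1y t) (g1k t) (V k).
rewrite (dX_sym gen (V g) (g1g t)) in U1.
rewrite (dX_sym gen (g1y t) (g1k t)) in U3.
have Etm : t = t0 \/ t = t1 by rewrite /t /Rmin; case: Rle_dec; [left|right].
have Ra := Rle_abs E.
have Wk := pos_INR (wl k).
case: Etm => Et; move: Et; rewrite /t0 /t1 => Et; lra.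
Qed.
End Main.

Theorem lemma4p2 (G : groupType) (A : finType) (pi : A -> G) (H : {pred G})
    (delta : nat) (E : R) :
  generates pi ->
  group_closed H ->
  (10 <= delta)%N ->
  all_triangles_trim pi (INR delta) ->
  quasiconvex pi H E ->
  exists K2 : R, (0 < K2)%R /\
  forall (g f : G) (w u : seq (A * bool)) (h1 h2 : G),
    shortest_in_coset pi H g -> shortest_in_coset pi H f ->
    near_geodesic pi H g f w -> near_geodesic pi H g f u ->
    h1 \in H -> h2 \in H ->
    (h1 * g * word_val pi w)%g = f -> (h2 * g * word_val pi u)%g = f ->
    let f' := (g * word_val pi w)%g in
    let h := (h1^-1 * h2)%g in
    forall sigma alpha beta : R -> pointX G A,
      geodesic pi (@Vtx G A g) (@Vtx G A (h * g)%g) sigma ->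
      geodesic pi (@Vtx G A g) (@Vtx G A f') alpha ->
      geodesic pi (@Vtx G A (h * g)%g) (@Vtx G A f') beta ->
      let c := gromov pi (@Vtx G A g) (@Vtx G A (h * g)%g) (@Vtx G A 1%g) in
      forall r : R, (0 <= r)%R -> (0 <= c - r)%R ->
        (c + r <= dX pi (@Vtx G A g) (@Vtx G A (h * g)%g))%R ->
        ((forall s, (c - r <= s <= c + r)%R ->
            exists s', (0 <= s' <= dX pi (@Vtx G A g) (@Vtx G A f'))%R /\
                       (dX pi (sigma s) (alpha s') <= INR delta)%R) \/
         (forall s, (c - r <= s <= c + r)%R ->
            exists s', (0 <= s' <= dX pi (@Vtx G A (h * g)%g) (@Vtx G A f'))%R /\
                       (dX pi (sigma s) (beta s') <= INR delta)%R)) ->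
        (2 * r <= K2)%R.
Proof.
move=> gen HG d10 trim qc.
have HV := group_closedV HG; have HM := group_closedM HG.
have D0 : (0 <= INR delta)%R by apply: pos_INR.
have HE := Rabs_pos E.
exists (2 * (4 * Rabs E + 6 * INR delta + 4) + 2 * INR delta + 4)%R; split; first lra.
move=> g f w u h1 h2 shg shf ngw ngu Hh1 Hh2 Ew Eu f' h sigma alpha beta Gs Ga Gb c r r0 cr0 crd Hcase.
have hH : h \in H by apply: HM; [apply: HV|].
have K1 := lemma33 gen HG D0 trim qc shg shf ngw Hh1 Ew.
have K2 := lemma33 gen HG D0 trim qc shg shf ngu Hh2 Eu.
have Hhl : (INR (wlen pi h) <= INR (wlen pi h1) + INR (wlen pi h2))%R.
  rewrite -plus_INR; apply: le_INR; apply/leP.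
  by have := wlM gen (h1^-1)%g h2; rewrite (wlV gen).
have Ef' : f' = (h * g * word_val pi u)%g.
  have -> : (h * g * word_val pi u = h1^-1 * (h2 * g * word_val pi u))%g by rewrite /h !mulgA.
  by rewrite Eu -Ew /f' !mulgA mulVg mul1g.
set d := dX pi (@Vtx G A g) (@Vtx G A (h * g)%g).
have Eg1 : dX pi (@Vtx G A g) (@Vtx G A 1%g) = INR (wlen pi g).
  by rewrite dX_vtx /dG mulg1 (wlV gen).
have Ehg1 : dX pi (@Vtx G A (h * g)%g) (@Vtx G A 1%g) = INR (wlen pi (h * g)%g).
  by rewrite dX_vtx /dG mulg1 (wlV gen).
have Sh : (INR (wlen pi g) <= INR (wlen pi (h * g)%g))%R.
  by apply: le_INR; apply/leP; apply: shg.
have Shg : (INR (wlen pi (h * g)%g) <= INR (wlen pi h) + INR (wlen pi g))%R.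
  rewrite -plus_INR; apply: le_INR; apply/leP; exact: wlM gen h g.
have Ec : c = ((d + INR (wlen pi g) - INR (wlen pi (h * g)%g)) / 2)%R.
  by rewrite /c /gromov -/d Eg1 Ehg1.
set L := dX pi (@Vtx G A g) (@Vtx G A f').
set L' := dX pi (@Vtx G A (h * g)%g) (@Vtx G A f').
have HL : (L <= L' + 4)%R.
  rewrite /L /L' !dX_vtx /dG /f' mulKg.
  have B1 := wl_le gen w.
  have B2 := near_geo_bound gen HG ngw hH.
  have : (wlen pi (word_val pi w) <= wlen pi ((h * g)^-1 * (g * word_val pi w)) + 4)%N
    := leq_trans B1 B2.
  move/leP/le_INR; rewrite plus_INR; simpl; lra.
have HL' : (L' <= L + 4)%R.
  have E3 : ((h * g)^-1 * f' = word_val pi u)%g by rewrite Ef' mulKg.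
  rewrite /L /L' !dX_vtx /dG E3.
  have B1 := wl_le gen u.
  have B2 := near_geo_bound gen HG ngu (HV _ hH).
  have E2 : ((h^-1 * g)^-1 * (g * word_val pi u) = g^-1 * (h * g * word_val pi u))%g.
    by rewrite invgM invgK !mulgA.
  rewrite E2 -Ef' in B2.
  have : (wlen pi (word_val pi u) <= wlen pi (g^-1 * f') + 4)%N
    := leq_trans B1 B2.
  move/leP/le_INR; rewrite plus_INR; simpl; lra.
have Ld : (0 <= d)%R by apply: dX_nonneg.
case: Hcase => Hc.
- have Hs : (c - r <= c + r <= c + r)%R by lra.
  have [s' [Hs' Ds]] := Hc _ Hs.
  have Hs0 : (0 <= c + r <= d)%R by lra.
  have [Dg Dhg] := geo_dist gen Gs Hs0.
  have [Ag Af] := geo_dist gen Ga Hs'.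
  have T1 := dX_tri gen (sigma (c + r)%R) (alpha s') (@Vtx G A g).
  have T2 := dX_tri gen (@Vtx G A (h * g)%g) (sigma (c + r)%R) (@Vtx G A f').
  have T3 := dX_tri gen (sigma (c + r)%R) (alpha s') (@Vtx G A f').
  rewrite (dX_sym gen (@Vtx G A (h * g)%g) (sigma (c + r)%R)) in T2.
  have Ed : dX pi (@Vtx G A g) (@Vtx G A (h * g)%g) = d by []. have EL : dX pi (@Vtx G A g) (@Vtx G A f') = L by []. have EL' : dX pi (@Vtx G A (h * g)%g) (@Vtx G A f') = L' by [].
  lra.
- have Hs : (c - r <= c - r <= c + r)%R by lra.
  have [s' [Hs' Ds]] := Hc _ Hs.
  have Hs0 : (0 <= c - r <= d)%R by lra.
  have [Dg Dhg] := geo_dist gen Gs Hs0.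
  have [Bhg Bf] := geo_dist gen Gb Hs'.
  have T1 := dX_tri gen (sigma (c - r)%R) (beta s') (@Vtx G A (h * g)%g).
  have T2 := dX_tri gen (@Vtx G A g) (sigma (c - r)%R) (@Vtx G A f').
  have T3 := dX_tri gen (sigma (c - r)%R) (beta s') (@Vtx G A f').
  rewrite (dX_sym gen (@Vtx G A g) (sigma (c - r)%R)) in T2.
  have Ed : dX pi (@Vtx G A g) (@Vtx G A (h * g)%g) = d by []. have EL : dX pi (@Vtx G A g) (@Vtx G A f') = L by []. have EL' : dX pi (@Vtx G A (h * g)%g) (@Vtx G A f') = L' by [].
  lra.
Qed.
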